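(* Let $\mathbb{F}$ be a finite field. For every $k\in\mathbb{N}$ there exists a CMSO formula $\mathrm{cc}(X,Z,\langle Y_1\rangle,\dots,\langle Y_k\rangle)$ over $\Sigma_{\mathbb{F}}$ such that for every matrix $A$ over $\mathbb{F}$, all sets $S\subseteq T$ of columns of $A$ and all virtual columns $\langle Q_1\rangle,\dots,\langle Q_k\rangle$ of $\mathcal{S}(A)$, we have $\mathcal{S}(A)\models\mathrm{cc}(S,T,\langle Q_1\rangle,\dots,\langle Q_k\rangle)$ if and only if $S$ is a connected component of the restriction $M(A,\{v(\langle Q_1\rangle),\dots,v(\langle Q_k\rangle)\})[T]$.
   Context: $\Sigma_{\mathbb{F}}$ has unary symbols $R,C$ and binary symbols $\mathrm{Entry}_\alpha$ ($\alpha\in\mathbb{F}$). For a matrix $A$ with rows $r_1,\dots,r_m$, $\mathcal{S}(A)$ has universe rows $\cup$ columns, $R$ = rows, $C$ = columns, $\mathrm{Entry}_\alpha=\{(r,c):A(r,c)=\alpha\}$. CMSO is monadic second-order logic with predicates $\mathrm{mod}_{a,b}(X)$ meaning $|X|\equiv a\pmod b$. A virtual column is a family $\langle Q\rangle=\{Q_\alpha\}_{\alpha\in\mathbb{F}}$ of pairwise disjoint sets of rows covering all rows, with vector $v(\langle Q\rangle)\in\mathbb{F}^m$ whose $i$-th coordinate is $\alpha$ where $r_i\in Q_\alpha$; in formulas it is an $\mathbb{F}$-indexed tuple of set variables. For $v_1,\dots,v_k\in\mathbb{F}^m$, $M(A,\{v_1,\dots,v_k\})$ is the matroid on the columns of $A$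 in which a set $\{u_1,\dots,u_\ell\}$ is dependent iff there exist $\alpha_i$, not all $0$, with $\sum_i\alpha_iu_i\in\mathrm{span}(v_1,\dots,v_k)$. $M[T]$ is the restriction to $T$; a connected component is an inclusion-wise maximal set any two elements of which lie in a common circuit. *)

(* Defs.v *)
From HB Require Import structures.
From mathcomp Require Import all_boot all_order all_algebra.
Set Implicit Arguments. Unset Strict Implicit. Unset Printing Implicit Defensive.
Import GRing.Theory.
Local Open Scope ring_scope.

Inductive cmso (L : Type) : Type :=
| CRow (x : nat)
| CCol (x : nat)
| CEntry (a : L) (x y : nat)
| CEq (x y : nat)
| CIn (x X : nat)
| CMod (a b : nat) (X : nat)
| CNot (phi : cmso L)
| CAnd (phi psi : cmso L)
| CEx (x : nat) (phi : cmso L)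
| CExS (X : nat) (phi : cmso L).

Record cstruct (L : Type) := CStruct {
  cs_univ : finType;
  cs_R : pred cs_univ;
  cs_C : pred cs_univ;
  cs_Ent : L -> rel cs_univ }.
Arguments cs_univ {L}. Arguments cs_R {L}. Arguments cs_C {L}. Arguments cs_Ent {L}.

Definition upd (T : Type) (f : nat -> T) (x : nat) (v : T) : nat -> T :=
  fun y => if y == x then v else f y.

Fixpoint sat {L : Type} (M : cstruct L) (ef : nat -> cs_univ M)
    (es : nat -> {set cs_univ M}) (phi : cmso L) : Prop :=
  match phi with
  | CRow x => cs_R M (ef x)
  | CCol x => cs_C M (ef x)
  | CEntry a x y => cs_Ent M a (ef x) (ef y)
  | CEq x y => ef x = ef y
  | CIn x X => ef x \in es X
  | CMod a b X => (#|es X| = a %[mod b])%N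
  | CNot p => ~ @sat L M ef es p
  | CAnd p q => @sat L M ef es p /\ @sat L M ef es q
  | CEx x p => exists u : cs_univ M, @sat L M (upd ef x u) es p
  | CExS X p => exists U : {set cs_univ M}, @sat L M ef (upd es X U) p
  end.

Section SA.
Variables (F : fieldType) (m n : nat) (A : 'M[F]_(m, n)).
Definition SA_R (u : ('I_m + 'I_n)%type) : bool := if u is inl _ then true else false.
Definition SA_C (u : ('I_m + 'I_n)%type) : bool := if u is inr _ then true else false.
Definition SA_E (a : F) (u w : ('I_m + 'I_n)%type) : bool :=
  match u, w with inl i, inr j => A i j == a | _, _ => false end.
End SA.

Definition SA (F : fieldType) (m n : nat) (A : 'M[F]_(m, n)) : cstruct F :=
  @CStruct F ('I_m + 'I_n)%type (@SA_R m n) (@SA_C m n) (SA_E A).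

Definition is_vcol (F : finFieldType) (m : nat) (Q : F -> {set 'I_m}) : Prop :=
  (forall a b : F, a != b -> [disjoint Q a & Q b]) /\
  (forall i : 'I_m, exists a : F, i \in Q a).

Definition vvec (F : finFieldType) (m : nat) (Q : F -> {set 'I_m}) : 'cV[F]_m :=
  \col_i (odflt 0 [pick a | i \in Q a]).

(* Name of the set variable Y_{i,alpha} (the alpha-component of <Y_{i+1}>);
   X is set variable 0 and Z is set variable 1. *)
Definition vcvar (F : finFieldType) (k : nat) (i : 'I_k) (a : F) : nat :=
  (2 + i * #|F| + enum_rank a)%N.

Section Matroid.
Variables (F : fieldType) (m n k : nat) (A : 'M[F]_(m, n)) (vs : 'I_k -> 'cV[F]_m).

Definition mdependent (X : {set 'I_n}) : Prop :=
  exists c : 'I_n -> F, (exists2 j, j \in X & c j != 0) /\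
    exists d : 'I_k -> F, \sum_(j in X) c j *: col j A = \sum_(i < k) d i *: vs i.

Definition mcircuit (X : {set 'I_n}) : Prop :=
  mdependent X /\ forall Y : {set 'I_n}, Y \proper X -> ~ mdependent Y.

(* Circuits of the restriction M[T] are the circuits of M contained in T. *)
Definition clique_in (T S : {set 'I_n}) : Prop :=
  forall x y, x \in S -> y \in S -> x != y ->
    exists C : {set 'I_n}, [/\ mcircuit C, C \subset T, x \in C & y \in C].

Definition conn_comp (T S : {set 'I_n}) : Prop :=
  [/\ S \subset T, clique_in T S &
      forall S' : {set 'I_n}, S \subset S' -> S' \subset T -> clique_in T S' -> S' = S].
End Matroid.

(* Main.v *)
Require Import Defs.
From mathcomp Require Import all_boot all_order all_algebra.
From mathcomp Require Import finfield.
From Stdlib Require Import Classical FunctionalExtensionality.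
Set Implicit Arguments. Unset Strict Implicit. Unset Printing Implicit Defensive.
Import GRing.Theory.
Local Open Scope ring_scope.

Lemma mp (P Q R : Prop) : P -> (Q -> R) -> (P -> Q) -> R.
Proof. by move=> p qr pq; apply: qr; apply: pq. Qed.

Section Logic.
Context {L : Type}.
Definition CTrue : cmso L := @CEq L 0 0.
Definition COr (p q : cmso L) := CNot (CAnd (CNot p) (CNot q)).
Definition CImp (p q : cmso L) := CNot (CAnd p (CNot q)).
Definition CIff (p q : cmso L) := CAnd (CImp p q) (CImp q p).
Definition CAll x (p : cmso L) := CNot (CEx x (CNot p)).
Definition CAllS X (p : cmso L) := CNot (CExS X (CNot p)).
Definition BigOr (T : Type) (s : seq T) (f : T -> cmso L) :=
  foldr (fun x acc => COr (f x) acc) (CNot CTrue) s.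
Definition BigAnd (T : Type) (s : seq T) (f : T -> cmso L) :=
  foldr (fun x acc => CAnd (f x) acc) CTrue s.
Fixpoint ExSl (vs : seq nat) (p : cmso L) :=
  match vs with [::] => p | v :: vs => CExS v (ExSl vs p) end.

Variable M : cstruct L.
Implicit Types (ef : nat -> cs_univ M) (es : nat -> {set cs_univ M}).

Lemma sat_true ef es : @sat L M ef es CTrue.
Proof. by []. Qed.

Lemma sat_and ef es p q : @sat L M ef es (CAnd p q) <-> @sat L M ef es p /\ @sat L M ef es q.
Proof. by []. Qed.

Lemma sat_not ef es p : @sat L M ef es (CNot p) <-> ~ @sat L M ef es p.
Proof. by []. Qed.

Lemma sat_exS ef es X p : @sat L M ef es (CExS X p) <-> exists U, @sat L M ef (upd es X U) p.
Proof. by []. Qed.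

Lemma sat_or ef es p q : @sat L M ef es (COr p q) <-> @sat L M ef es p \/ @sat L M ef es q.
Proof. simpl; tauto. Qed.

Lemma sat_imp ef es p q : @sat L M ef es (CImp p q) <-> (@sat L M ef es p -> @sat L M ef es q).
Proof. simpl; tauto. Qed.

Lemma sat_iff ef es p q : @sat L M ef es (CIff p q) <-> (@sat L M ef es p <-> @sat L M ef es q).
Proof. simpl; tauto. Qed.

Lemma sat_all ef es x p : @sat L M ef es (CAll x p) <-> forall u, @sat L M (upd ef x u) es p.
Proof.
simpl; split.
- by move=> H u; apply: NNPP => H'; apply: H; exists u.
- by move=> H [u Hu]; apply: Hu.
Qed.

Lemma sat_allS ef es X p : @sat L M ef es (CAllS X p) <-> forall U, @sat L M ef (upd es X U) p.
Proof.
simpl; split.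
- by move=> H u; apply: NNPP => H'; apply: H; exists u.
- by move=> H [u Hu]; apply: Hu.
Qed.

Lemma sat_bigOr (T : eqType) (s : seq T) f ef es :
  @sat L M ef es (BigOr s f) <-> exists x, x \in s /\ @sat L M ef es (f x).
Proof.
elim: s => [|x s IH].
- split; [move=> H; exfalso; exact: H | by case=> y []; rewrite in_nil].
- have -> : BigOr (x :: s) f = COr (f x) (BigOr s f) by [].
  rewrite sat_or IH; split.
  + case=> [H|[y [Hy H]]]; first by exists x; rewrite mem_head.
    by exists y; rewrite in_cons Hy orbT.
  + case=> y []; rewrite in_cons => /orP [/eqP->|Hy] H; first by left.
    by right; exists y.
Qed.

Lemma sat_bigAnd (T : eqType) (s : seq T) f ef es :
  @sat L M ef es (BigAnd s f) <-> forall x, x \in s -> @sat L M ef es (f x).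
Proof.
elim: s => [|x s IH].
- by split=> // _ y; rewrite in_nil.
- have -> : BigAnd (x :: s) f = CAnd (f x) (BigAnd s f) by [].
  rewrite /= IH; split.
  + by case=> H1 H2 y; rewrite in_cons => /orP [/eqP->|Hy] //; apply: H2.
  + move=> H; split; first by apply: H; rewrite mem_head.
    by move=> y Hy; apply: H; rewrite in_cons Hy orbT.
Qed.

Lemma upd_same (T : Type) (f : nat -> T) x v : upd f x v x = v.
Proof. by rewrite /upd eqxx. Qed.

Lemma upd_other (T : Type) (f : nat -> T) x v y : y != x -> upd f x v y = f y.
Proof. by rewrite /upd => /negPf ->. Qed.

Lemma sat_ExSl vs p ef es :
  @sat L M ef es (ExSl vs p) <->
  exists es', (forall y, y \notin vs -> es' y = es y) /\ @sat L M ef es' p.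
Proof.
elim: vs es => [|v vs IH] es /=.
- split; first by move=> H; exists es.
  case=> es' [H1 H2]; suff -> : es = es' by [].
  by apply: functional_extensionality => y; rewrite H1.
- split.
  + case=> U /IH [es' [H1 H2]]; exists es'; split=> // y.
    rewrite in_cons negb_or => /andP [Hyv Hy]; rewrite H1 //.
    by rewrite upd_other.
  + case=> es' [H1 H2]; exists (es' v); apply/IH; exists es'; split=> // y Hy.
    rewrite /upd; case: eqP => [->//|/eqP Hyv]; apply: H1.
    by rewrite in_cons negb_or Hy andbT.
Qed.
End Logic.

Section Formulas.
Variables (F : finFieldType) (k : nat).
Definition Md : nat := s2val (finPcharP F).
Definition Pv (b : nat) (a : F) : nat := (b + enum_rank a)%N.
Definition Wv (b : nat) : nat := (b + #|F|)%N.
Definition memW b (g : F) : cmso F :=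
  BigOr (enum [pred ab : F * F | ab.1 * ab.2 == g])
        (fun ab => CAnd (@CIn F b.+1 (Pv b ab.1)) (CEntry ab.2 b b.+1)).
Definition Wdef b g : cmso F := CAll b.+1 (CIff (@CIn F b.+1 (Wv b)) (memW b g)).
Definition rowterm b g (t : 'I_Md) : cmso F :=
  CExS (Wv b) (CAnd (Wdef b g) (@CMod F t Md (Wv b))).
Definition Qcond b (e : {ffun 'I_k -> F}) : cmso F :=
  BigAnd (enum 'I_k) (fun l => @CIn F b (vcvar l (e l))).
Definition rowc b (d : {ffun 'I_k -> F}) : cmso F :=
  BigOr (enum [pred te : {ffun F -> 'I_Md} * {ffun 'I_k -> F} |
                 \sum_g (te.1 g)%:R * g == \sum_l d l * te.2 l])
        (fun te => CAnd (Qcond b te.2) (BigAnd (enum F) (fun g => rowterm b g (te.1 g)))).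
End Formulas.

Lemma Md_gt0 (F : finFieldType) : (0 < Md F)%N.
Proof. by rewrite /Md; case: (finPcharP F) => p Hp _ /=; apply: prime_gt0. Qed.

Lemma Md_char (F : finFieldType) : (Md F)%:R = 0 :> F.
Proof. by rewrite /Md; case: (finPcharP F) => p _ Hp /=; apply: pcharf0. Qed.

Lemma mulrn_mod (F : finFieldType) (x : F) N : x *+ N = x *+ (N %% Md F).
Proof.
rewrite {1}(divn_eq N (Md F)) mulrnDr mulnC mulrnA -(mulr_natr x) Md_char mulr0.
by rewrite mul0rn add0r.
Qed.

Lemma vvec_mem (F : finFieldType) m (Q : F -> {set 'I_m}) i :
  is_vcol Q -> i \in Q (vvec Q i 0).
Proof.
case=> _ Hc; rewrite /vvec mxE; case: pickP => [a Ha|H] //=.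
by case: (Hc i) => a Ha; rewrite H in Ha.
Qed.

Lemma vvec_uniq (F : finFieldType) m (Q : F -> {set 'I_m}) i a :
  is_vcol Q -> i \in Q a -> vvec Q i 0 = a.
Proof.
move=> HQ Ha; have := vvec_mem i HQ; set a' := vvec Q i 0 => Ha'.
apply/eqP; apply: contraT => Hne.
by have := disjointFr (HQ.1 _ _ Hne) Ha'; rewrite Ha.
Qed.

Lemma memL (A B : finType) (S : {set A}) (x : A) :
  ((inl x : (A + B)%type) \in inl @: S) = (x \in S).
Proof. by apply: mem_imset; apply: inl_inj. Qed.

Lemma memR (A B : finType) (S : {set B}) (x : B) :
  ((inr x : (A + B)%type) \in inr @: S) = (x \in S).
Proof. by apply: mem_imset; apply: inr_inj. Qed.

Lemma memLR (A B : finType) (S : {set B}) (x : A) :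
  ((inl x : (A + B)%type) \in inr @: S) = false.
Proof. by apply/negbTE/imsetP => [[y _]]. Qed.

Lemma memRL (A B : finType) (S : {set A}) (x : B) :
  ((inr x : (A + B)%type) \in inl @: S) = false.
Proof. by apply/negbTE/imsetP => [[y _]]. Qed.

Lemma neqS (b : nat) : b != b.+1.
Proof. by rewrite neq_ltn ltnSn. Qed.

Lemma PvW (F : finFieldType) b (a : F) : Pv b a != Wv F b.
Proof. by rewrite /Pv /Wv eqn_add2l neq_ltn ltn_ord. Qed.

Section Row.
Variables (F : finFieldType) (k m n : nat) (A : 'M[F]_(m, n)) (Q : 'I_k -> F -> {set 'I_m}).
Hypothesis HQ : forall i, is_vcol (Q i).
Notation SAT := (@sat F (SA A)).
Notation U := ('I_m + 'I_n)%type.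

Lemma rowc_sem b (d : {ffun 'I_k -> F}) (ef : nat -> U) (es : nat -> {set U}) i (X : {set 'I_n}) (c : 'I_n -> F) :
  (forall (l : 'I_k) (a : F), (vcvar l a < b)%N) ->
  (forall (l : 'I_k) (a : F), es (vcvar l a) = inl @: Q l a) ->
  (forall j a, (inr j \in es (Pv b a)) = (j \in X) && (c j == a)) ->
  SAT (upd ef b (inl i)) es (rowc b d) <->
  \sum_(j in X) c j * A i j = \sum_l d l * vvec (Q l) i 0.
Proof.
move=> Hlt HesQ Hc.
pose Wset g := [set j in X | c j * A i j == g].
have Hsum : \sum_(j in X) c j * A i j = \sum_g ((#|Wset g| %% Md F)%:R * g).
  rewrite (partition_big (fun j => c j * A i j) predT) //=.
  apply: eq_bigr => g _; rewrite mulr_natl -mulrn_mod -sumr_const.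
  apply: eq_big => [j|j /andP [_ /eqP] //]; by rewrite inE.
have HQc : forall e : {ffun 'I_k -> F},
    SAT (upd ef b (inl i)) es (Qcond b e) <-> e = [ffun l => vvec (Q l) i 0].
  move=> e; rewrite sat_bigAnd; split.
  - move=> H; apply/ffunP => l; rewrite ffunE; apply/esym/vvec_uniq => //.
    by have := H l (mem_enum _ l); rewrite /= upd_same HesQ memL.
  - move=> -> l _ /=; rewrite upd_same HesQ ffunE memL.
    exact: vvec_mem.
have HWdef : forall g (W : {set U}),
    SAT (upd ef b (inl i)) (upd es (Wv F b) W) (Wdef b g) <-> W = inr @: Wset g.
  move=> g W; rewrite /Wdef sat_all.
  have Hmem : forall u, SAT (upd (upd ef b (inl i)) b.+1 u) (upd es (Wv F b) W) (memW b g) <->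
       u \in inr @: Wset g.
    move=> u; rewrite sat_bigOr; split.
    - case=> [[a b']] []; rewrite mem_enum inE /= => /eqP Hg [].
      rewrite !upd_same upd_other ?PvW // upd_other ?neqS // upd_same.
      case: u => [r|j] //= Hj /eqP HA; rewrite memR.
      by move: Hj; rewrite Hc inE => /andP [-> /eqP ->]; rewrite HA Hg /=.
    - case/imsetP => j; rewrite inE => /andP [HjX /eqP Hg] ->.
      exists (c j, A i j); rewrite mem_enum inE /= Hg eqxx; split=> //.
      rewrite !upd_same upd_other ?PvW // upd_other ?neqS // upd_same.
      by rewrite Hc HjX eqxx /=.
  split.
  - move=> H; apply/setP => u.
    have := H u; rewrite sat_iff Hmem /= !upd_same.
    by case: (u \in W); case: (u \in inr @: Wset g) => // [[H1 H2]]; [apply: esym; apply: H1 | apply: H2].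
  - move=> HW u; rewrite sat_iff Hmem /= !upd_same HW; tauto.
have Hrow : forall g (t : 'I_(Md F)),
    SAT (upd ef b (inl i)) es (rowterm b g t) <-> t = (#|Wset g| %% Md F)%N :> nat.
  move=> g t; rewrite /rowterm /=; split.
  - case=> W [/HWdef HW]; rewrite upd_same HW card_imset; last by apply: inr_inj.
    by move=> ->; rewrite modn_small.
  - move=> Ht; exists (inr @: Wset g); split; first by apply/HWdef.
    by rewrite upd_same card_imset ?Ht ?modn_mod //; apply: inr_inj.
rewrite /rowc sat_bigOr Hsum; split.
- case=> [[t e]] []; rewrite mem_enum inE /= => /eqP Heq [/HQc He /sat_bigAnd Ht].
  have -> : \sum_g ((#|Wset g| %% Md F)%:R * g) = \sum_g ((t g)%:R * g).
    apply: eq_bigr => g _; congr (_%:R * _); apply/esym/(Hrow g (t g)).1.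
    by apply: Ht; rewrite mem_enum.
  by rewrite Heq He; apply: eq_bigr => l _; rewrite ffunE.
- move=> Heq.
  have Ht : forall g, (#|Wset g| %% Md F < Md F)%N by move=> g; rewrite ltn_mod Md_gt0.
  exists ([ffun g => Ordinal (Ht g)], [ffun l => vvec (Q l) i 0]).
  rewrite mem_enum inE /=; split.
    apply/eqP; rewrite (eq_bigr (fun g => (#|Wset g| %% Md F)%:R * g)); last by move=> g _; rewrite ffunE.
    by rewrite Heq; apply: eq_bigr => l _; rewrite ffunE.
  split; first by apply/HQc.
  by apply/sat_bigAnd => g _; apply/Hrow; rewrite ffunE.
Qed.
End Row.

Section Formulas2.
Variables (F : finFieldType) (k : nat).
Definition part b x : cmso F := CAll b.+1 (CAnd
   (BigAnd (enum F) (fun a => CImp (@CIn F b.+1 (Pv b a)) (@CIn F b.+1 x)))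
   (CAnd (CImp (@CIn F b.+1 x) (BigOr (enum F) (fun a => @CIn F b.+1 (Pv b a))))
         (BigAnd (enum [pred aa : F * F | aa.1 != aa.2])
                 (fun aa => CNot (CAnd (@CIn F b.+1 (Pv b aa.1)) (@CIn F b.+1 (Pv b aa.2))))))).
Definition nontriv b : cmso F :=
  BigOr (enum [pred a : F | a != 0]) (fun a => CEx b.+1 (@CIn F b.+1 (Pv b a))).
Definition depF b x : cmso F := BigOr (enum {ffun 'I_k -> F}) (fun d =>
  ExSl [seq Pv b a | a <- enum F]
    (CAnd (part b x) (CAnd (nontriv b) (CAll b (CImp (@CRow F b) (rowc b d)))))).
End Formulas2.

Lemma notinPv (F : finFieldType) b y : (y < b)%N -> y \notin [seq Pv b a | a <- enum F].
Proof.
move=> Hy; apply/mapP => [[a _ E]]; move: Hy; rewrite E /Pv.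
by rewrite ltnNge leq_addr.
Qed.

Lemma Pv_inj (F : finFieldType) b : injective (@Pv F b).
Proof. by move=> a a' /addnI /ord_inj /enum_rank_inj. Qed.

Section Dep.
Variables (F : finFieldType) (k m n : nat) (A : 'M[F]_(m, n)) (Q : 'I_k -> F -> {set 'I_m}).
Hypothesis HQ : forall i, is_vcol (Q i).
Notation SAT := (@sat F (SA A)).
Notation U := ('I_m + 'I_n)%type.

Lemma sum_entry (X : {set 'I_n}) (c : 'I_n -> F) i :
  (\sum_(j in X) c j *: col j A) i 0 = \sum_(j in X) c j * A i j.
Proof. by rewrite summxE; apply: eq_bigr => j _; rewrite !mxE. Qed.

Lemma sum_entry2 (d : 'I_k -> F) i :
  (\sum_l d l *: vvec (Q l)) i 0 = \sum_l d l * vvec (Q l) i 0.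
Proof. by rewrite summxE; apply: eq_bigr => j _; rewrite !mxE. Qed.

Lemma depF_sem b x (ef : nat -> U) (es : nat -> {set U}) (X : {set 'I_n}) :
  (x < b)%N -> (forall (l : 'I_k) (a : F), (vcvar l a < b)%N) ->
  es x = inr @: X ->
  (forall (l : 'I_k) (a : F), es (vcvar l a) = inl @: Q l a) ->
  SAT ef es (depF F k b x) <-> mdependent A (fun l => vvec (Q l)) X.
Proof.
move=> Hx Hlt HX HesQ; split.
- case/sat_bigOr => d [_ /sat_ExSl [es' [Hag [Hpart [Hnt Hrows]]]]].
  change (SAT ef es' (part F b x)) in Hpart.
  change (SAT ef es' (nontriv F b)) in Hnt.
  change (SAT ef es' (CAll b (CImp (@CRow F b) (rowc b d)))) in Hrows.
  have HX' : es' x = inr @: X by rewrite Hag ?notinPv.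
  have HQ' : forall (l : 'I_k) (a : F), es' (vcvar l a) = inl @: Q l a.
    by move=> l a; rewrite Hag ?notinPv.
  pose c := fun j : 'I_n => odflt (0 : F) [pick a : F | (inr j : U) \in es' (Pv b a)].
  have HP : forall j : 'I_n, [/\ forall a : F, (inr j : U) \in es' (Pv b a) -> j \in X,
                         j \in X -> exists a : F, (inr j : U) \in es' (Pv b a) &
                         forall a a' : F, a != a' -> (inr j : U) \in es' (Pv b a) -> (inr j : U) \in es' (Pv b a) -> inr j \in es' (Pv b a') -> False].
    move=> j; move: Hpart => /sat_all /(_ (inr j)) /sat_and [H1 /sat_and [H2 H3]].
    split.
    + move=> a Ha; move: H1 => /sat_bigAnd /(_ a (mem_enum _ a)).
      by rewrite sat_imp /= upd_same HX' memR; apply.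
    + move=> Hj; move: H2; rewrite sat_imp /= upd_same HX' memR.
      case/(_ Hj)/sat_bigOr => a [_]; rewrite /= upd_same => Ha; by exists a.
    + move=> a a' Hne Ha Ha'.
      move: H3 => /sat_bigAnd /(_ (a, a')); rewrite mem_enum inE /= => /(_ Hne).
      by rewrite /= !upd_same => H *; apply: H.
  have Hc : forall (j : 'I_n) (a : F), (inr j \in es' (Pv b a)) = (j \in X) && (c j == a).
    move=> j a; have [P1 P2 P3] := HP j.
    case Hj: (inr j \in es' (Pv b a)).
    + rewrite (P1 _ Hj) /= /c; case: pickP => [a' Ha'|/(_ a)]; last by rewrite Hj.
      rewrite /=; apply/esym/eqP; apply: NNPP => Hne; apply: (P3 a' a) => //; by apply/eqP => E; apply: Hne; rewrite E.
    + symmetry; apply/negbTE/negP => /andP [HjX /eqP Hca].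
      case: (P2 HjX) => a' Ha'; move: Hca; rewrite /c; case: pickP => [a'' Ha''|/(_ a')]; last by rewrite Ha'.
      by move=> /= E; move: Ha''; rewrite E Hj.
  exists c; split.
  + case/sat_bigOr: Hnt => a []; rewrite mem_enum inE => Ha [u]; rewrite /= upd_same.
    case: u => [r|j] Hu.
    * exfalso; move: Hpart => /sat_all /(_ (inl r)) /sat_and [H1 _].
      move: H1 => /sat_bigAnd /(_ a (mem_enum _ a)).
      by rewrite sat_imp /= !upd_same HX' memLR; move/(_ Hu).
    * rewrite Hc in Hu; case/andP: Hu => HjX /eqP Hca; exists j => //.
      by rewrite Hca.
  + exists d; apply/colP => i; rewrite sum_entry sum_entry2.
    move: Hrows => /sat_all /(_ (inl i)); rewrite sat_imp /= upd_same; move/(_ isT).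
    by move/(rowc_sem A HQ d ef i Hlt HQ' Hc).
- case=> c [[j0 Hj0 Hcj0] [d Hd]].
  pose es' y := if [pick a | Pv b a == y] is Some a then inr @: [set j in X | c j == a] else es y.
  have Hes'P : forall a, es' (Pv b a) = inr @: [set j in X | c j == a].
    move=> a; rewrite /es'; case: pickP => [a' /eqP /Pv_inj -> //|/(_ a)]; by rewrite eqxx.
  have Hag : forall y, y \notin [seq Pv b a | a <- enum F] -> es' y = es y.
    move=> y Hy; rewrite /es'; case: pickP => [a' /eqP E|//].
    by move: Hy; rewrite -E map_f ?mem_enum.
  have HX' : es' x = inr @: X by rewrite Hag ?notinPv.
  have HQ' : forall (l : 'I_k) (a : F), es' (vcvar l a) = inl @: Q l a.
    by move=> l a; rewrite Hag ?notinPv.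
  have Hc : forall (j : 'I_n) (a : F), (inr j \in es' (Pv b a)) = (j \in X) && (c j == a).
    by move=> j a; rewrite Hes'P memR inE.
  apply/sat_bigOr; exists [ffun l => d l]; split; first by rewrite mem_enum.
  apply/sat_ExSl; exists es'; split=> //; split; [|split].
  + apply/sat_all => u; split; [|split].
    * apply/sat_bigAnd => a _; rewrite sat_imp /= !upd_same HX'.
      case: u => [r|j]; first by rewrite Hes'P memLR.
      by rewrite Hc memR => /andP [].
    * rewrite sat_imp /= !upd_same HX'; case: u => [r|j]; first by rewrite memLR.
      rewrite memR => Hj; apply/sat_bigOr; exists (c j); split; first by rewrite mem_enum.
      by rewrite /= upd_same Hc Hj eqxx.
    * apply/sat_bigAnd => [[a a']]; rewrite mem_enum inE /= => Hne; rewrite !upd_same.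
      case: u => [r|j]; first by rewrite Hes'P memLR; case.
      rewrite !Hc => [[/andP [_ /eqP E1] /andP [_ /eqP E2]]].
      by move: Hne; rewrite -E1 -E2 eqxx.
  + apply/sat_bigOr; exists (c j0); split; first by rewrite mem_enum inE.
    by exists (inr j0); rewrite /= upd_same Hc Hj0 eqxx.
  + apply/sat_all => u; rewrite sat_imp /= upd_same; case: u => [i|j] // _.
    apply/(rowc_sem A HQ _ ef i Hlt HQ' Hc).
    have := congr1 (fun M0 : 'cV[F]_m => M0 i 0) Hd; rewrite /= sum_entry sum_entry2 => ->.
    by apply: eq_bigr => l _; rewrite ffunE.
Qed.
End Dep.

Section Formulas3.
Variables (F : finFieldType) (k : nat).
Definition SubF x y : cmso F := CAll 0 (CImp (@CIn F 0 x) (@CIn F 0 y)).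
Definition circF b x : cmso F :=
  CAnd (depF F k b.+1 x)
       (CAllS b (CImp (CAnd (SubF b x) (CNot (SubF x b))) (CNot (depF F k b.+1 b)))).
Definition cliqueF b x : cmso F :=
  CAll b (CAll b.+1 (CImp (CAnd (@CIn F b x) (CAnd (@CIn F b.+1 x) (CNot (@CEq F b b.+1))))
     (CExS b (CAnd (SubF b 1) (CAnd (@CIn F b b) (CAnd (@CIn F b.+1 b) (circF b.+2 b))))))).
Definition B0 : nat := (2 + k * #|F|)%N.
Definition phiF : cmso F :=
  CAnd (SubF 0 1) (CAnd (cliqueF B0 0)
    (CAllS B0 (CImp (CAnd (SubF 0 B0) (CAnd (SubF B0 1) (cliqueF B0.+1 B0))) (SubF B0 0)))).
End Formulas3.

Lemma vcvar_lt (F : finFieldType) k (l : 'I_k) (a : F) : (vcvar l a < B0 F k)%N.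
Proof.
rewrite /vcvar /B0 -addnA ltn_add2l.
have H1 := ltn_ord l; have H2 : (enum_rank a < #|F|)%N := ltn_ord (enum_rank a).
apply: (@leq_trans (l * #|F| + #|F|)%N); first by rewrite ltn_add2l.
by rewrite -mulSnr leq_mul2r H1 orbT.
Qed.

Section Top.
Variables (F : finFieldType) (k m n : nat) (A : 'M[F]_(m, n)) (Q : 'I_k -> F -> {set 'I_m}).
Hypothesis HQ : forall i, is_vcol (Q i).
Notation SAT := (@sat F (SA A)).
Notation U := ('I_m + 'I_n)%type.
Notation vs := (fun l => vvec (Q l)).

Lemma subR (X Y : {set 'I_n}) : (inr @: X \subset (inr @: Y : {set U})) = (X \subset Y).
Proof.
apply/subsetP/subsetP => H j.
- by move=> Hj; have := H (inr j); rewrite !memR; apply.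
- by case/imsetP => j' Hj' ->; rewrite memR; apply: H.
Qed.

Lemma colsetK (Y : {set U}) (X : {set 'I_n}) :
  Y \subset inr @: X -> Y = inr @: [set j | inr j \in Y].
Proof.
move/subsetP => H; apply/setP => u; case: u => [r|j].
- by rewrite memLR; apply/negbTE/negP => /H; rewrite memLR.
- by rewrite memR inE.
Qed.

Lemma sat_sub ef es x y : SAT ef es (SubF F x y) <-> es x \subset es y.
Proof.
rewrite /SubF sat_all; split.
- by move=> H; apply/subsetP => u; have := H u; rewrite sat_imp /= upd_same.
- by move/subsetP => H u; rewrite sat_imp /= upd_same; apply: H.
Qed.

Lemma circF_sem b x ef (es : nat -> {set U}) (X : {set 'I_n}) :
  (x < b)%N -> (forall (l : 'I_k) (a : F), (vcvar l a < b)%N) ->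
  es x = inr @: X ->
  (forall (l : 'I_k) (a : F), es (vcvar l a) = inl @: Q l a) ->
  SAT ef es (circF F k b x) <-> mcircuit A vs X.
Proof.
move=> Hx Hlt HX HesQ.
have Hlt' : forall (l : 'I_k) (a : F), (vcvar l a < b.+1)%N by move=> l a; rewrite ltnS ltnW.
have Hx' : (x < b.+1)%N by rewrite ltnS ltnW.
have HxB : x != b by rewrite neq_ltn Hx.
have HvB : forall (l : 'I_k) (a : F), vcvar l a != b by move=> l a; rewrite neq_ltn Hlt.
rewrite /circF sat_and (depF_sem A HQ ef Hx' Hlt' HX HesQ) sat_allS.
have Hsem : forall Y : {set 'I_n}, SAT ef (upd es b (inr @: Y)) (depF F k b.+1 b) <-> mdependent A vs Y.
  move=> Y; apply: (depF_sem A HQ ef (ltnSn b) Hlt'); first by rewrite upd_same.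
  by move=> l a; rewrite upd_other.
split.
- case=> Hd H; split=> // Y HY.
  move/properP: HY => [HYX [j Hj HjY]].
  move/sat_imp: (H (inr @: Y)) => H'; move/Hsem => HdY.
  have: SAT ef (upd es b (inr @: Y)) (CNot (depF F k b.+1 b)).
    apply: H'; apply/sat_and; split.
    + by apply/sat_sub; rewrite upd_same upd_other // HX subR.
    + apply/sat_not => /sat_sub; rewrite upd_same upd_other // HX subR.
      by move/subsetP/(_ j Hj); rewrite (negbTE HjY).
  by move/sat_not; apply.
- case=> Hd H; split=> // Y; apply/sat_imp => /sat_and [/sat_sub HYX /sat_not HXY].
  rewrite upd_same upd_other // HX in HYX.
  pose Y' := [set j | (inr j : U) \in Y].
  have EY : Y = inr @: Y' := colsetK HYX.
  move: HYX HXY; rewrite EY subR => HYX HXY.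
  apply/sat_not => /Hsem; apply: H.
  rewrite properEneq HYX andbT; apply/negP => /eqP E; apply: HXY.
  by apply/sat_sub; rewrite upd_same upd_other // HX E.
Qed.

Lemma cliqueF_sem b x ef (es : nat -> {set U}) (S0 T : {set 'I_n}) :
  (x < b)%N -> (1 < b)%N -> (forall (l : 'I_k) (a : F), (vcvar l a < b)%N) ->
  es x = inr @: S0 -> es 1%N = inr @: T ->
  (forall (l : 'I_k) (a : F), es (vcvar l a) = inl @: Q l a) ->
  SAT ef es (cliqueF F k b x) <-> clique_in A vs T S0.
Proof.
move=> Hx H1 Hlt HS HT HesQ.
have H1b : 1%N != b by rewrite neq_ltn H1.
have Hlt2 : forall (l : 'I_k) (a : F), (vcvar l a < b.+2)%N by move=> l a; apply: (ltn_trans (Hlt l a)); rewrite ltnS.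
have HvB : forall (l : 'I_k) (a : F), vcvar l a != b by move=> l a; rewrite neq_ltn Hlt.
have Hb2 : (b < b.+2)%N by rewrite ltnS.
have Hcirc : forall ef' (C : {set 'I_n}),
    SAT ef' (upd es b (inr @: C)) (circF F k b.+2 b) <-> mcircuit A vs C.
  move=> ef' C; apply: (circF_sem ef' Hb2 Hlt2); first by rewrite upd_same.
  by move=> l a; rewrite upd_other.
rewrite /cliqueF sat_all; split.
- move=> H x' y' Hx' Hy' Hne.
  move: (H (inr x')) => /sat_all /(_ (inr y')) /sat_imp.
  apply: mp.
    apply/sat_and; split; first by rewrite /= upd_other ?neqS // upd_same HS memR.
    apply/sat_and; split; first by rewrite /= upd_same HS memR.
    apply/sat_not; rewrite /= upd_same upd_other ?neqS // upd_same => [[E]].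
    by move: Hne; rewrite E eqxx.
  move/sat_exS => [C /sat_and [/sat_sub HC /sat_and [Hu /sat_and [Hw Hc]]]].
  rewrite upd_same upd_other // HT in HC.
  pose C' := [set j | (inr j : U) \in C].
  have EC : C = inr @: C' := colsetK HC.
  move: HC Hu Hw Hc; rewrite EC subR => HC Hu Hw /Hcirc Hc.
  exists C'; split=> //.
  + by move: Hu; rewrite /= upd_same upd_other ?neqS // upd_same memR.
  + by move: Hw; rewrite /= !upd_same memR.
- move=> H u; apply/sat_all => w; apply/sat_imp => /sat_and [Hu /sat_and [Hw /sat_not Hne]].
  have Eu : upd (upd ef b u) b.+1 w b = u by rewrite upd_other ?neqS // upd_same.
  have Ew : upd (upd ef b u) b.+1 w b.+1 = w by rewrite upd_same.
  simpl in Hu, Hw, Hne; rewrite Eu HS in Hu; rewrite Ew HS in Hw; rewrite Eu Ew in Hne.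
  clear Eu Ew; case: u Hu Hne => [r|x']; first by rewrite memLR.
  case: w Hw => [r|y']; first by rewrite memLR.
  rewrite !memR => Hy' Hx' Hne.
  have Hne' : x' != y' by apply/negP => /eqP E; apply: Hne; rewrite E.
  case: (H x' y' Hx' Hy' Hne') => C' [Hc HC Hxc Hyc].
  apply/sat_exS; exists (inr @: C'); apply/sat_and; split.
    by apply/sat_sub; rewrite upd_same upd_other // HT subR.
  apply/sat_and; split.
    by rewrite /= upd_same upd_other ?neqS // upd_same memR.
  apply/sat_and; split; first by rewrite /= !upd_same memR.
  by apply/Hcirc.
Qed.

Lemma phi_sem ef (es : nat -> {set U}) (S T : {set 'I_n}) :
  es 0%N = inr @: S -> es 1%N = inr @: T ->
  (forall (l : 'I_k) (a : F), es (vcvar l a) = inl @: Q l a) ->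
  SAT ef es (phiF F k) <-> conn_comp A vs T S.
Proof.
move=> HS HT HesQ.
have H0 : (0 < B0 F k)%N by [].
have H1 : (1 < B0 F k)%N by [].
have Hlt := @vcvar_lt F k.
have Hlt' : forall (l : 'I_k) (a : F), (vcvar l a < (B0 F k).+1)%N by move=> l a; rewrite ltnS ltnW.
have H0b : 0%N != B0 F k by [].
have H1b : 1%N != B0 F k by [].
have HvB : forall (l : 'I_k) (a : F), vcvar l a != B0 F k by move=> l a; rewrite neq_ltn Hlt.
have Hcl : forall ef' (Y : {set 'I_n}),
    SAT ef' (upd es (B0 F k) (inr @: Y)) (cliqueF F k (B0 F k).+1 (B0 F k)) <-> clique_in A vs T Y.
  move=> ef' Y; apply: (cliqueF_sem ef' (ltnSn _) _ Hlt');
    [by rewrite ltnS ltnW | by rewrite upd_same | by rewrite upd_other // HT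
    | by move=> l a; rewrite upd_other ?HvB // HesQ].
rewrite /phiF sat_and sat_sub HS HT subR sat_and (cliqueF_sem ef H0 H1 Hlt HS HT HesQ) sat_allS.
split.
- case=> HST [Hc Hmax]; split=> // S' HSS' HS'T HcS'.
  move/sat_imp: (Hmax (inr @: S')); apply: mp.
    apply/sat_and; split; first by apply/sat_sub; rewrite upd_same upd_other // HS subR.
    apply/sat_and; split; first by apply/sat_sub; rewrite upd_same upd_other // HT subR.
    by apply/Hcl.
  move/sat_sub; rewrite upd_same upd_other // HS subR => HS'S.
  by apply/eqP; rewrite eqEsubset HS'S.
- case=> HST Hc Hmax; split=> //; split=> // Y.
  apply/sat_imp => /sat_and [/sat_sub HSY /sat_and [/sat_sub HYT HcY]].
  rewrite upd_same upd_other // HS in HSY; rewrite upd_same upd_other // HT in HYT.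
  pose Y' := [set j | (inr j : U) \in Y].
  have EY : Y = inr @: Y' := colsetK HYT.
  move: HSY HYT HcY; rewrite EY !subR => HSY HYT /Hcl HcY.
  by apply/sat_sub; rewrite upd_same upd_other // HS subR (Hmax _ HSY HYT HcY).
Qed.
End Top.

Local Close Scope ring_scope.

Theorem lemma10 (F : finFieldType) (k : nat) :
  exists phi : cmso F,
    forall (m n : nat) (A : 'M[F]_(m, n)) (S T : {set 'I_n})
           (Q : 'I_k -> F -> {set 'I_m}),
      S \subset T -> (forall i, is_vcol (Q i)) ->
      forall (ef : nat -> ('I_m + 'I_n)%type) (es : nat -> {set ('I_m + 'I_n)%type}),
        es 0%N = inr @: S -> es 1%N = inr @: T ->
        (forall (i : 'I_k) (a : F), es (vcvar i a) = inl @: Q i a) ->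
        (@sat F (SA A) ef es phi <->
         conn_comp A (fun i => vvec (Q i)) T S).
Proof.
exists (phiF F k) => m n A S T Q _ HQ ef es HS HT HesQ.
exact: (phi_sem HQ ef HS HT HesQ).
Qed.
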